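(* Let $G$ be a group and let $S$ be a finite subset of $G$. Let $F$ be a subset of $G$ that is finite or cofinite (i.e. $G\setminus F$ is finite), such that $F\cap S^{-1}=\{1\}$. Then $|(FS)\setminus F|\ge|S|-1$.
   Context: $FS=\{xy : x\in F,\ y\in S\}$ and $S^{-1}=\{s^{-1}: s\in S\}$; $1$ is the identity of $G$. *)

(* Defs.v *)
From HB Require Import structures.
From mathcomp Require Import all_boot monoid.
From mathcomp Require Import boolp classical_sets cardinality.
From mathcomp Require Import finmap.

Set Implicit Arguments.
Unset Strict Implicit.
Unset Printing Implicit Defensive.

Local Open Scope classical_set_scope.
Local Open Scope group_scope.

Definition setmulg (G : groupType) (F S : set G) : set G :=
  [set z | exists2 x, F x & exists2 y, S y & z = x * y].

Definition setinvg (G : groupType) (S : set G) : set G :=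
  [set z | exists2 s, S s & z = s^-1].

(* Main.v *)
Require Import Defs.
From HB Require Import structures.
From mathcomp Require Import all_boot monoid.
From mathcomp Require Import boolp classical_sets cardinality.
From mathcomp Require Import finmap.
From mathcomp Require Import zify.

Local Open Scope classical_set_scope.
Local Open Scope group_scope.

Section S.
Local Open Scope fset_scope.
Variable G : groupType.
Implicit Types A B W : {fset G}.

Definition prodf A B : {fset G} := [fset a * b | a in A, b in B].

Lemma prodfP A B z : reflect (exists2 a, a \in A & exists2 b, b \in B & z = a * b) (z \in prodf A B).
Proof. exact: imfset2P. Qed.

Lemma prodf_in A B a b : a \in A -> b \in B -> a * b \in prodf A B.
Proof. by move=> ha hb; apply/prodfP; exists a => //; exists b. Qed.

Lemma card_rmul A g : #|` [fset a * g | a in A]| = #|` A|.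
Proof. by rewrite card_imfset //; apply: mulIg. Qed.

Lemma card_lmul A g : #|` [fset g * a | a in A]| = #|` A|.
Proof. by rewrite card_imfset //; apply: mulgI. Qed.

Definition good A B := [/\ 1 \in A, 1 \in B &
  forall a b, a \in A -> b \in B -> a * b = 1 -> a = 1].

Lemma goodA A B : good A B -> A `<=` prodf A B.
Proof. case=> _ h1 _; apply/fsubsetP=> a ha; rewrite -[a]mulg1; exact: prodf_in. Qed.
Lemma goodB A B : good A B -> B `<=` prodf A B.
Proof. case=> h1 _ _; apply/fsubsetP=> a ha; rewrite -[a]mul1g; exact: prodf_in. Qed.

Lemma base A B : good A B -> (forall g, g \in A -> g \in B -> g = 1) ->
  (#|` A| + #|` B| <= #|` prodf A B| + 1)%N.
Proof.
move=> gd hI.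
have hAI : #|` A `&` B| <= 1.
  have -> : A `&` B = [fset 1].
    apply/fsetP=> x; rewrite in_fsetI in_fset1; apply/andP/eqP.
      by case=> ??; apply: hI.
    by move=> ->; case: gd.
  by rewrite cardfs1.
have hU : #|` A `|` B| <= #|` prodf A B|.
  by apply: fsubset_leq_card; rewrite fsubUset goodA ?goodB.
have := cardfsUI A B; lia.
Qed.

Section Step.
Variables (A B : {fset G}) (g : G).
Hypotheses (gd : good A B) (gA : g \in A) (gB : g \in B) (g1 : g != 1).
Let P := [fset a in A | a * g \notin A].
Let Q := [fset b in B | g * b \notin B].

Lemma ginvA : g^-1 \notin A.
Proof.
apply/negP=> h; case: gd=> _ _ hh; have := hh _ _ h gB (mulVg g).
by move/eqP; rewrite invg_eq1 (negbTE g1).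
Qed.
Lemma ginvB : g^-1 \notin B.
Proof.
apply/negP=> h; case: gd=> _ _ hh; have := hh _ _ gA h (mulgV g).
by move/eqP; rewrite (negbTE g1).
Qed.

Lemma P_gt0 : (0 < #|` P|)%N.
Proof.
rewrite cardfs_gt0; apply/negP=> /eqP P0.
have sub : [fset a * g | a in A] `<=` A.
  apply/fsubsetP=> x /imfsetP[a /= ha ->]; apply/negPn/negP=> hn.
  have : a \in P by rewrite !inE ha hn.
  by rewrite P0 inE.
have e : [fset a * g | a in A] = A.
  by apply/eqP; rewrite eqEfcard sub card_rmul leqnn.
case: gd=> h1 _ _; move: h1; rewrite -e => /imfsetP[a /= ha].
move/esym/mulg1_eq=> ea.
have : g^-1 \in A by rewrite -ea invgK.
by rewrite (negbTE ginvA).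
Qed.

Definition A1 := A `|` [fset a * g | a in P].
Definition B1 := B `\` Q.
Definition A2 := A `\` P.
Definition B2 := B `|` [fset g * b | b in Q].

Lemma cA1 : #|` A1| = (#|` A| + #|` P|)%N.
Proof.
rewrite /A1 cardfsU card_rmul.
suff -> : A `&` [fset a * g | a in P] = fset0 by rewrite cardfs0 subn0.
apply/fsetP=> x; rewrite in_fsetI inE; apply/negbTE/negP=> /andP[hx /imfsetP[a /= ha ex]].
by move: ha; rewrite !inE -ex hx andbF.
Qed.
Lemma cB1 : #|` B1| = (#|` B| - #|` Q|)%N.
Proof. by rewrite /B1 cardfsDS //; apply/fsubsetP=> x; rewrite inE => /andP[]. Qed.
Lemma cA2 : #|` A2| = (#|` A| - #|` P|)%N.
Proof. by rewrite /A2 cardfsDS //; apply/fsubsetP=> x; rewrite inE => /andP[]. Qed.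
Lemma cB2 : #|` B2| = (#|` B| + #|` Q|)%N.
Proof.
rewrite /B2 cardfsU card_lmul.
suff -> : B `&` [fset g * b | b in Q] = fset0 by rewrite cardfs0 subn0.
apply/fsetP=> x; rewrite in_fsetI inE; apply/negbTE/negP=> /andP[hx /imfsetP[a /= ha ex]].
by move: ha; rewrite !inE -ex hx andbF.
Qed.

Lemma memB1 y : y \in B1 -> y \in B /\ g * y \in B.
Proof.
rewrite /B1 in_fsetD => /andP[hP hy]; split=> //.
by apply/negPn/negP=> hn; move: hP; rewrite !inE hy hn.
Qed.

Lemma good1 : good A1 B1.
Proof.
case: gd=> h1A h1B hh; split.
- by rewrite /A1 inE h1A.
- by rewrite /B1 !inE h1B mulg1 gB.
move=> x y; rewrite /A1 inE => /orP[hx|/imfsetP[a /= ha ->]] /memB1[hy hgy].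
  by apply: hh.
move: ha; rewrite !inE => /andP[ha _].
rewrite -mulgA => e.
have a1 := hh _ _ ha hgy e; move: e; rewrite a1 mul1g => /mulg1_eq ey.
by have := ginvB; rewrite ey hy.
Qed.

Lemma sub1 : prodf A1 B1 `<=` prodf A B.
Proof.
apply/fsubsetP=> z /prodfP[x hx [y /memB1[hy hgy] ->]].
move: hx; rewrite /A1 inE => /orP[hx|/imfsetP[a /= ha ->]].
  exact: prodf_in.
move: ha; rewrite !inE => /andP[ha _].
by rewrite -mulgA; apply: prodf_in.
Qed.

Lemma memA2 x : x \in A2 -> x \in A /\ x * g \in A.
Proof.
rewrite /A2 in_fsetD => /andP[hP hx]; split=> //.
by apply/negPn/negP=> hn; move: hP; rewrite !inE hx hn.
Qed.

Lemma good2 : good A2 B2.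
Proof.
case: gd=> h1A h1B hh; split.
- by rewrite /A2 !inE h1A mul1g gA.
- by rewrite /B2 inE h1B.
move=> x y /memA2[hx hxg]; rewrite /B2 !inE => /orP[hy|/imfsetP[b /= hb ->]].
  by apply: hh.
move: hb; rewrite !inE => /andP[hb _].
rewrite mulgA => e.
have a1 := hh _ _ hxg hb e; move/mulg1_eq: a1 => ex.
by have := ginvA; rewrite -ex invgK hx.
Qed.

Lemma sub2 : prodf A2 B2 `<=` prodf A B.
Proof.
apply/fsubsetP=> z /prodfP[x /memA2[hx hxg] [y hy ->]].
move: hy; rewrite /B2 !inE => /orP[hy|/imfsetP[b /= hb ->]].
  exact: prodf_in.
move: hb; rewrite !inE => /andP[hb _].
by rewrite mulgA; apply: prodf_in.
Qed.

Lemma cPA : (#|` P| <= #|` A|)%N.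
Proof. by apply: fsubset_leq_card; apply/fsubsetP=> x; rewrite inE => /andP[]. Qed.
Lemma cQB : (#|` Q| <= #|` B|)%N.
Proof. by apply: fsubset_leq_card; apply/fsubsetP=> x; rewrite inE => /andP[]. Qed.

Lemma step_ex : exists A' B', [/\ good A' B', prodf A' B' `<=` prodf A B &
   (#|` A| + #|` B| < #|` A'| + #|` B'|)%N \/
   (#|` A| + #|` B| = #|` A'| + #|` B'| /\ #|` A| < #|` A'|)%N].
Proof.
have hp := P_gt0; have := cPA; have := cQB.
case: (leqP #|` Q| #|` P|) => hpq.
  exists A1, B1; split; [exact: good1|exact: sub1|].
  rewrite cA1 cB1; lia.
exists A2, B2; split; [exact: good2|exact: sub2|].
rewrite cA2 cB2; left; lia.
Qed.
End Step.

Arguments goodA {A B}.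
Arguments goodB {A B}.
Arguments step_ex {A B g}.

Lemma subT (X Y Z : {fset G}) : X `<=` Y -> Y `<=` Z -> X `<=` Z.
Proof. by move=> h1 h2; apply/fsubsetP=> a /(fsubsetP h1) /(fsubsetP h2). Qed.
Arguments subT {X Y Z}.

Lemma scherk A B : good A B -> (#|` A| + #|` B| <= #|` prodf A B| + 1)%N.
Proof.
move=> gd; set W := prodf A B.
have hW : prodf A B `<=` W by [].
set w := #|` W|.
suff key : forall n A B, good A B -> prodf A B `<=` W ->
   ((2 * w - #|` A| - #|` B|) * (w + 1) + (w - #|` A|) < n)%N ->
   (#|` A| + #|` B| <= #|` prodf A B| + 1)%N.
  by apply: (key _ A B gd hW); apply: ltnSn.
have wE : #|` W| = w by [].
clearbody w.
elim=> [|n IH] A' B' gd' sW //.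
have ha : (#|` A'| <= w)%N by rewrite -wE; apply: fsubset_leq_card; exact: subT (goodA gd') sW.
have hb : (#|` B'| <= w)%N by rewrite -wE; apply: fsubset_leq_card; exact: subT (goodB gd') sW.
move=> hm.
case: (boolP [exists x : A', (val x \in B') && (val x != 1)]).
  case/existsP=> -[g /= gA] /andP[gB g1].
  have [A'' [B'' [gd'' s'' hs]]] := step_ex gd' gA gB g1.
  have sW'' := subT s'' sW.
  have ha' : (#|` A''| <= w)%N by rewrite -wE; apply: fsubset_leq_card; exact: subT (goodA gd'') sW''.
  have hb' : (#|` B''| <= w)%N by rewrite -wE; apply: fsubset_leq_card; exact: subT (goodB gd'') sW''.
  have hc : (#|` prodf A'' B''| <= #|` prodf A' B'|)%N by apply: fsubset_leq_card.
  have H := IH A'' B'' gd'' sW''.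
  have hs' : (#|` A'| + #|` B'| <= #|` A''| + #|` B''|)%N.
    by case: hs => [/ltnW //|[-> _]].
  have hh : (#|` A''| + #|` B''| <= #|` prodf A'' B''| + 1)%N.
    apply: H; move: hs hm ha hb ha' hb'.
    set a1 := #|` A'|; set b1 := #|` B'|; set a2 := #|` A''|; set b2 := #|` B''|.
    case=> [?|[? ?]] ? ? ? ? ?; nia.
  by apply: leq_trans hs' _; apply: leq_trans hh _; rewrite leq_add2r.
move=> hp; apply: base => // x hx hB; apply/eqP/negPn/negP=> h1.
move/negP: hp; apply; apply/existsP; exists [` hx]; by rewrite /= hB h1.
Qed.
End S.

Arguments prodf {G}.
Arguments good {G}.
Arguments prodf_in {G A B a b}.
Arguments prodfP {G A B z}.
Arguments scherk {G A B}.

Lemma fsI (G : choiceType) (A : set G) x : finite_set A -> A x -> x \in fset_set A.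
Proof. by move=> fA Ax; rewrite in_fset_set //; apply: mem_set. Qed.
Lemma fsE (G : choiceType) (A : set G) x : finite_set A -> x \in fset_set A -> A x.
Proof. by move=> fA; rewrite in_fset_set // => /set_mem. Qed.

Arguments fsI {G A x}.
Arguments fsE {G A x}.

Theorem corollary5p3 (G : groupType) (S F : set G) :
  finite_set S ->
  (finite_set F \/ finite_set (~` F)) ->
  F `&` setinvg S = [set 1] ->
  finite_set (setmulg F S `\` F) /\
  (#|` fset_set S| - 1 <= #|` fset_set (setmulg F S `\` F)|)%N.
Proof.
move=> fS fF E.
have h1F : F 1.
  by have : [set 1] (1 : G) by []; rewrite -E => -[].
have h1S : S 1.
  have : [set 1] (1 : G) by []; rewrite -E => -[_ [s Ss e]].
  by have -> : (1 : G) = s by rewrite -[s]invgK -e invg1.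
have hinv : forall s, S s -> F s^-1 -> s = 1.
  move=> s Ss Fs; have : (F `&` setinvg S) s^-1 by split=> //; exists s.
  by rewrite E => /= e; rewrite -[s]invgK e invg1.
have hfin : finite_set (setmulg F S `\` F).
  case: fF => fF.
    apply: finite_setD; have := finite_fset (prodf (fset_set F) (fset_set S)); apply: sub_finite_set.
    move=> z [x Fx [y Sy ->]] /=; apply: prodf_in; exact: fsI.
  by apply: (sub_finite_set _ fF) => z [].
split=> //.
set X := fset_set (setmulg F S `\` F).
have memX : forall z, z \in X <-> (setmulg F S `\` F) z.
  by move=> z; split; [exact: fsE|exact: fsI].
case: fF => fF.
  set A := fset_set F; set B := fset_set S.
  have gd : good A B.
    split; [exact: fsI|exact: fsI|].
    move=> a b /(fsE fF) Fa /(fsE fS) Sb /mulg1_eq ab.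
    have hb : b = 1 by apply: hinv Sb _; rewrite -ab invgK.
    by rewrite -[a]invgK ab hb invg1.
  have hs := scherk gd.
  have sub : (prodf A B `<=` X `|` A)%fset.
    apply/fsubsetP=> z /prodfP[a ha [b hb ->]]; rewrite in_fsetU.
    case: (pselect (F (a * b))) => hF; first by rewrite (fsI fF hF) orbT.
    apply/orP; left; apply/memX; split=> //.
    by exists a; [exact: fsE ha|exists b => //; exact: fsE hb].
  have := fsubset_leq_card sub; rewrite cardfsU.
  move: hs; set pa := #|` prodf A B|; set xa := #|` X|; set aa := #|` A|.
  set ia := #|` (X `&` A)%fset|; set bb := #|` B|; lia.
set C := fset_set (~` F).
have XC : (X `<=` C)%fset.
  by apply/fsubsetP=> z /memX [_ hz]; exact: fsI.
set D := (C `\` X)%fset.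
have memD : forall z, z \in D -> ~ F z /\ ~ (setmulg F S z).
  move=> z; rewrite in_fsetD => /andP[hX hC]; split; first exact: (fsE fF hC).
  move=> hz; move/negP: hX; apply; apply/memX; split=> //; exact: (fsE fF hC).
set A := (1 |` D)%fset.
set B := [fset s^-1 | s in fset_set S]%fset.
have cB : #|` B| = #|` fset_set S|.
  by rewrite card_imfset //; apply: invg_inj.
have n1D : 1 \notin D.
  by apply/negP=> /memD [] /(_ h1F).
have cA : #|` A| = (#|` D| + 1)%N by rewrite cardfsU1 n1D addnC.
have cD : #|` D| = (#|` C| - #|` X|)%N by rewrite cardfsDS.
have cXC := fsubset_leq_card XC.
have gd : good A B.
  split.
  - by rewrite !inE eqxx.
  - by apply/imfsetP; exists 1; [exact: (fsI fS h1S)|rewrite invg1].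
  move=> x y; rewrite in_fset1U => /orP[/eqP -> //|hx] /imfsetP[s /= hs ->] e.
  move/mulg1_eq: e; rewrite -{2}(invgK x) => /invg_inj ex.
  have [_ hxS] := memD _ hx; exfalso; apply: hxS.
  by exists 1 => //; exists s; [exact: (fsE fS hs)|rewrite mul1g ex].
have hs := scherk gd.
have sub : (prodf A B `<=` 1 |` C)%fset.
  apply/fsubsetP=> z /prodfP[x hx [y /imfsetP[s /= hs' ->] ->]].
  have Ss := fsE fS hs'.
  rewrite in_fset1U; move: hx; rewrite in_fset1U => /orP[/eqP ->|hx].
    rewrite mul1g; case: (pselect (s = 1)) => [->|s1]; first by rewrite invg1 eqxx.
    apply/orP; right; apply: fsI => // Fs; exact: s1 (hinv _ Ss Fs).
  apply/orP; right; apply: fsI => // Fz.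
  have [hxF hxS] := memD _ hx; apply: hxS.
  by exists (x * s^-1) => //; exists s => //; rewrite mulgVK.
have := fsubset_leq_card sub; rewrite cardfsU1.
move: hs cA cD cXC cB; set pa := #|` prodf A B|; set aa := #|` A|; set bb := #|` B|.
set dd := #|` D|; set cc := #|` C|; set xx := #|` X|; set ss := #|` fset_set S|.
case: (1 \in C) => /=; lia.
Qed.
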